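(* Let $\Sigma$ be a finite connected multigraph (loops allowed) and $\varphi,\vartheta\colon V(\Sigma)\to\mathbb{R}_{\ge0}$ functions such that $\Delta(\varphi)-\Delta(\vartheta)=F-G$, where $F$ and $G$ are effective divisors on $\Sigma$ of degree at most $d$. Suppose there are (not necessarily distinct) vertices $v,w$ with $\varphi(v)=\vartheta(w)=0$. Then \[\max_{u\in V(\Sigma)}|\varphi(u)-\vartheta(u)|\le d\cdot\operatorname{diam}(\Sigma).\]
   Context: A divisor on $\Sigma$ is a formal sum $\sum_v a_v(v)$ with $a_v\in\mathbb{R}$; it is effective if all $a_v\ge0$, and its degree is $\sum_v a_v$. For $\varphi\colon V(\Sigma)\to\mathbb{R}$, the Laplacian is the divisor $\Delta(\varphi)(v)=\sum_{e=vw}(\varphi(v)-\varphi(w))$, the sum over edges $e$ incident to $v$ with other endpoint $w$ (loops contribute $0$). $\operatorname{diam}(\Sigma)$ is the maximum over pairs of vertices of the number of edges in a shortest path joining them. *)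

(* Defs.v *)
From HB Require Import structures.
From mathcomp Require Import all_boot all_order all_algebra.
Set Implicit Arguments. Unset Strict Implicit. Unset Printing Implicit Defensive.
Import Order.TTheory GRing.Theory Num.Theory.

(* A finite multigraph (loops and multiple edges allowed): a finite vertex
   type V, a finite edge type E, and each edge e has endpoints src e, tgt e
   (the orientation is auxiliary; all notions below are orientation-free). *)

Section Graph.
Variables (V E : finType) (src tgt : E -> V).

Definition adj : rel V :=
  fun u w => [exists e : E, ((src e == u) && (tgt e == w)) || ((src e == w) && (tgt e == u))].

Definition connectedG : Prop := forall u w : V, connect adj u w.

Definition walkn (n : nat) (u w : V) : bool :=
  [exists p : n.-tuple V, path adj u p && (last u p == w)].

(* graph distance: least number of edges of a walk from u to w
   (equal to #|V| if no such walk of length < #|V| exists, which cannot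
   happen for a connected graph) *)
Definition dist (u w : V) : nat := find (fun n => walkn n u w) (iota 0 #|V|).

Definition diam : nat := \max_(u : V) \max_(w : V) dist u w.

Local Open Scope ring_scope.
Variable R : realFieldType.

(* An edge with src e = v contributes
   phi v - phi (tgt e); an edge with tgt e = v contributes phi v - phi (src e);
   hence a loop contributes 0. *)
Definition laplacian (phi : V -> R) (v : V) : R :=
  \sum_(e : E | src e == v) (phi v - phi (tgt e)) +
  \sum_(e : E | tgt e == v) (phi v - phi (src e)).

Definition effective (D : V -> R) : Prop := forall v, 0 <= D v.
Definition degree (D : V -> R) : R := \sum_(v : V) D v.
End Graph.

(* Main.v *)
Require Import Defs.
From HB Require Import structures.
From mathcomp Require Import all_boot all_order all_algebra.
From mathcomp Require Import ring lra.
Import Order.TTheory GRing.Theory Num.Theory.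
Local Open Scope ring_scope.

Section Aux.
Variable R : realFieldType.

Lemma sum_if_eq (T : finType) (P : pred T) (j : T) (f : T -> R) :
  \sum_(z | P z) (if j == z then f z else 0) = if P j then f j else 0.
Proof.
rewrite -big_mkcondr /=.
case Pj: (P j).
  rewrite (big_pred1 j) // => z /=; rewrite eq_sym; case: (z =P j) => [->|]; by rewrite ?Pj ?andbF.
rewrite big_pred0 // => z /=; case: (j =P z) => [<-|]; by rewrite ?Pj ?andbF.
Qed.

Variables (V E : finType).

Section S1.
Variables (src tgt : E -> V).
Lemma lap_sum (psi : V -> R) (P : pred V) :
  \sum_(z | P z) laplacian src tgt psi z =
  \sum_e ((if P (src e) then psi (src e) - psi (tgt e) else 0) +
          (if P (tgt e) then psi (tgt e) - psi (src e) else 0)).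
Proof.
rewrite /laplacian big_split /= big_split /=.
congr (_ + _).
  under eq_bigr => z _ do rewrite big_mkcond /=.
  rewrite exchange_big /=; apply: eq_bigr => e _.
  rewrite -(@sum_if_eq _ P (src e) (fun z => psi z - psi (tgt e))).
  by apply: eq_bigr => z _; case: eqP => // ->.
under eq_bigr => z _ do rewrite big_mkcond /=.
rewrite exchange_big /=; apply: eq_bigr => e _.
rewrite -(@sum_if_eq _ P (tgt e) (fun z => psi z - psi (src e))).
by apply: eq_bigr => z _; case: eqP => // ->.
Qed.

Lemma edge_bound (psi F G : V -> R) (d : R) :
  (forall z, laplacian src tgt psi z = F z - G z) ->
  effective F -> effective G -> degree F <= d ->
  forall e, psi (src e) - psi (tgt e) <= d.
Proof.
move=> HL HF HG Hd e0.
have d0 : 0 <= d by apply: le_trans Hd; apply: sumr_ge0 => z _; exact: HF.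
case: (lerP (psi (src e0) - psi (tgt e0)) 0) => Hc; first exact: le_trans Hc d0.
set P := fun z => psi (src e0) <= psi z.
have Ht : ~~ P (tgt e0) by rewrite /P -ltNge -subr_gt0.
have Hs : P (src e0) by rewrite /P.
have Hsum := lap_sum psi P.
have H1 : psi (src e0) - psi (tgt e0) <= \sum_(z | P z) laplacian src tgt psi z.
  rewrite Hsum (bigD1 e0) //= Hs (negbTE Ht) addr0 lerDl.
  apply: sumr_ge0 => e _.
  case Ps: (P (src e)); case Pt: (P (tgt e)); rewrite ?addr0 ?add0r //.
  - by rewrite addrA subrK subrr.
  - rewrite subr_ge0; move: Ps Pt; rewrite /P => Ps /negbT; rewrite -ltNge => Pt.
    exact: ltW (lt_le_trans Pt Ps).
  - rewrite subr_ge0; move: Ps Pt; rewrite /P => /negbT; rewrite -ltNge => Ps Pt.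
    exact: ltW (lt_le_trans Ps Pt).
apply: le_trans H1 _.
under eq_bigr => z _ do rewrite HL.
apply: le_trans Hd.
apply: le_trans (_ : \sum_(z | P z) F z <= _).
  by apply: ler_sum => z _; rewrite lerBlDr lerDl HG.
rewrite /degree [X in _ <= X](bigID P) /= lerDl.
by apply: sumr_ge0 => z _; exact: HF.
Qed.

End S1.
Arguments edge_bound {src tgt psi F G d}.
Variables (src tgt : E -> V).
Lemma adj_bound (psi F G : V -> R) (d : R) :
  (forall z, laplacian src tgt psi z = F z - G z) ->
  effective F -> effective G -> degree F <= d ->
  forall x y, adj src tgt x y -> `|psi y - psi x| <= d.
Proof.
move=> HL HF HG Hd.
have HL' : forall z, laplacian tgt src psi z = F z - G z.
  by move=> z; rewrite -HL /laplacian addrC.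
have B1 := edge_bound HL HF HG Hd.
have B2 := edge_bound HL' HF HG Hd.
move=> x y /existsP [e /orP [/andP [/eqP Hs /eqP Ht] | /andP [/eqP Hs /eqP Ht]]];
  subst; rewrite ler_norml lerNl opprB; apply/andP; split.
- exact: B1.
- exact: B2.
- exact: B2.
- exact: B1.
Qed.

Lemma path_bound (psi : V -> R) (d : R) :
  (forall x y, adj src tgt x y -> `|psi y - psi x| <= d) ->
  forall p x, path (adj src tgt) x p -> `|psi (last x p) - psi x| <= d * (size p)%:R.
Proof.
move=> Hadj; elim => [|y p IH] x /=; first by rewrite subrr normr0 mulr0.
move=> /andP [Hxy Hp].
apply: le_trans (ler_distD (psi y) _ _) _.
rewrite -natr1 mulrDr mulr1; apply: lerD; [exact: IH | exact: Hadj].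
Qed.

Lemma dist_walk (u w : V) :
  connectedG src tgt -> walkn src tgt (dist src tgt u w) u w.
Proof.
move=> Hc.
have Hhas : has (fun n => walkn src tgt n u w) (iota 0 #|V|).
  case/connectP: (Hc u w) => p Hp ->.
  case: (shortenP Hp) => p' Hp' Hu _.
  apply/hasP; exists (size p').
    rewrite mem_iota add0n /=.
    have := max_card (mem (u :: p')).
    by move/card_uniqP: Hu => -> /=.
  by apply/existsP; exists (in_tuple p'); rewrite Hp' eqxx.
have := nth_find 0 Hhas.
rewrite /dist nth_iota ?add0n //.
by move: Hhas; rewrite has_find size_iota.
Qed.

Lemma dist_bound (psi F G : V -> R) (d : R) :
  connectedG src tgt ->
  (forall z, laplacian src tgt psi z = F z - G z) ->
  effective F -> effective G -> degree F <= d ->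
  forall u w, `|psi w - psi u| <= d * (diam src tgt)%:R.
Proof.
move=> Hc HL HF HG Hd u w.
have d0 : 0 <= d by apply: le_trans Hd; apply: sumr_ge0 => z _; exact: HF.
have /existsP [p /andP [Hp /eqP Hl]] := dist_walk u w Hc.
have := @path_bound psi d (@adj_bound psi F G d HL HF HG Hd) _ _ Hp.
rewrite Hl size_tuple => H; apply: le_trans H _.
apply: ler_wpM2l => //; rewrite ler_nat /diam.
have H1 := @leq_bigmax V (fun w => dist src tgt u w) w.
have H2 := @leq_bigmax V (fun u => \max_w dist src tgt u w) u.
exact: leq_trans H1 H2.
Qed.

End Aux.

Theorem mainTheorem8 (R : realFieldType) (V E : finType) (src tgt : E -> V)
  (phi theta F G : V -> R) (d : R) :
  connectedG src tgt ->
  (forall u, 0 <= phi u) -> (forall u, 0 <= theta u) ->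
  (forall u, laplacian src tgt phi u - laplacian src tgt theta u = F u - G u) ->
  effective F -> effective G ->
  degree F <= d -> degree G <= d ->
  (exists v w : V, phi v = 0 /\ theta w = 0) ->
  forall u : V, `|phi u - theta u| <= d * (diam src tgt)%:R.
Proof.
move=> Hc Hphi Htheta HL HF HG HdF HdG [v [w [Hv Hw]]] u.
set psi := fun z => phi z - theta z.
have HL' : forall z, laplacian src tgt psi z = F z - G z.
  move=> z; rewrite -HL /laplacian /psi opprD addrACA -!sumrB;
  by congr (_ + _); apply: eq_bigr => e _; ring.
have Hb := @dist_bound R V E src tgt psi F G d Hc HL' HF HG HdF.
rewrite ler_norml; apply/andP; split.
- have := Hb u w; rewrite ler_norml => /andP [_ H]; move: H.
  rewrite /psi Hw; have := Hphi w; lra.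
- have := Hb v u; rewrite ler_norml => /andP [_ H]; move: H.
  rewrite /psi Hv; have := Htheta v; lra.
Qed.
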